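(* Let $\varepsilon\in(0,1]$, $L\in[0,\infty)$, $q\in(1,\infty)$, $\alpha\in[0,\infty)\setminus\{1\}$, let $f\colon\mathbb R\to\mathbb R$ satisfy $|f(x)-f(y)|\le L|x-y|$ for all $x,y\in\mathbb R$, and let $a\in C(\mathbb R,\mathbb R)$ satisfy $a(x)=\max\{x,\alpha x\}$ for all $x\in\mathbb R$. Then there exists $\mathbf G\in\mathbf N$ such that (i) $\mathcal R_a(\mathbf G)\in C(\mathbb R,\mathbb R)$; (ii) $\mathcal H(\mathbf G)=1$; (iii) $|(\mathcal R_a(\mathbf G))(x)-(\mathcal R_a(\mathbf G))(y)|\le L|x-y|$ for all $x,y\in\mathbb R$; (iv) $|(\mathcal R_a(\mathbf G))(x)-f(x)|\le\varepsilon\max\{1,|x|^q\}$ for all $x\in\mathbb R$; (v) $\mathbb D_1(\mathbf G)\le4(\max\{1,2L\})^{q/(q-1)}\varepsilon^{-q/(q-1)}+2$; and (vi) $\mathcal P(\mathbf G)=3\mathbb D_1(\mathbf G)+1\le24(\max\{1,2L\})^{q/(q-1)}\varepsilon^{-q/(q-1)}$.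
   Context: Artificial neural networks (ANNs). Let $\mathbb N=\{1,2,\dots\}$ and $\mathbf N=\bigcup_{L\in\mathbb N}\bigcup_{l_0,\dots,l_L\in\mathbb N}\prod_{k=1}^L(\mathbb R^{l_k\times l_{k-1}}\times\mathbb R^{l_k})$. For $\Phi=((W_1,B_1),\dots,(W_L,B_L))$ in the $(l_0,\dots,l_L)$ component, $\mathcal P(\Phi)=\sum_{k=1}^Ll_k(l_{k-1}+1)$, $\mathcal H(\Phi)=L-1$, $\mathbb D_1(\Phi)=l_1$. For $a\in C(\mathbb R,\mathbb R)$ the realization $\mathcal R_a(\Phi)\colon\mathbb R^{l_0}\to\mathbb R^{l_L}$ is $(\mathcal R_a(\Phi))(x_0)=W_Lx_{L-1}+B_L$ with $x_k=\mathfrak M_{a,l_k}(W_kx_{k-1}+B_k)$, $k=1,\dots,L-1$, where $\mathfrak M_{a,m}$ applies $a$ componentwise. *)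

(* Defs.v *)
From HB Require Import structures.
From mathcomp Require Import all_boot all_order all_algebra.
From mathcomp Require Import all_classical all_reals all_analysis.
Set Implicit Arguments. Unset Strict Implicit. Unset Printing Implicit Defensive.
Import Order.TTheory GRing.Theory Num.Theory.
Local Open Scope ring_scope.

(* An ANN ((W_1,B_1),...,(W_L,B_L)) with input dim l0 and output dim lL.
   [ann_last W B] is the last (affine, no activation) layer,
   [ann_cons W B G] prepends a layer followed by the activation. *)
Inductive ann (R : Type) : nat -> nat -> Type :=
| ann_last : forall l0 l1 : nat, 'M[R]_(l1, l0) -> 'M[R]_(l1, 1) -> ann R l0 l1
| ann_cons : forall l0 l1 lL : nat, 'M[R]_(l1, l0) -> 'M[R]_(l1, 1) ->
    ann R l1 lL -> ann R l0 lL.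

Fixpoint ann_wf (R : Type) l0 lL (G : ann R l0 lL) : bool :=
  match G with
  | @ann_last _ l0 l1 _ _ => (0 < l0)%N && (0 < l1)%N
  | @ann_cons _ l0 _ _ _ _ G' => (0 < l0)%N && ann_wf G'
  end.

Fixpoint realization (R : pzRingType) (a : R -> R) l0 lL (G : ann R l0 lL)
  : 'cV[R]_l0 -> 'cV[R]_lL :=
  match G with
  | ann_last _ _ W B => fun x => W *m x + B
  | ann_cons _ _ _ W B G' => fun x => realization a G' (map_mx a (W *m x + B))
  end.

Definition realization1 (R : pzRingType) (a : R -> R) (G : ann R 1 1) (x : R) : R :=
  realization a G (const_mx x) ord0 ord0.

Fixpoint ann_params (R : Type) l0 lL (G : ann R l0 lL) : nat :=
  match G with
  | @ann_last _ l0 l1 _ _ => (l1 * (l0 + 1))%N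
  | @ann_cons _ l0 l1 _ _ _ G' => (l1 * (l0 + 1) + ann_params G')%N
  end.

Fixpoint ann_length (R : Type) l0 lL (G : ann R l0 lL) : nat :=
  match G with
  | ann_last _ _ _ _ => 1%N
  | ann_cons _ _ _ _ _ G' => (ann_length G').+1
  end.

Definition ann_hidden (R : Type) l0 lL (G : ann R l0 lL) : nat := (ann_length G).-1.

Definition ann_D1 (R : Type) l0 lL (G : ann R l0 lL) : nat :=
  match G with
  | @ann_last _ _ l1 _ _ => l1
  | @ann_cons _ _ l1 _ _ _ _ => l1
  end.

(* Main.v *)
Require Import Defs.
From HB Require Import structures.
From mathcomp Require Import all_boot all_order all_algebra.
From mathcomp Require Import all_classical all_reals all_analysis.
From mathcomp Require Import ring lra zify.
Import Order.TTheory GRing.Theory Num.Theory numFieldNormedType.Exports.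
Set Implicit Arguments. Unset Strict Implicit.
Local Open Scope ring_scope.

Ltac mmx := repeat match goal with
  | |- context [Num.max ?a ?b] => rewrite (maxEle a b); case: (leP a b); move=> ?
  | |- context [Num.min ?a ?b] => rewrite (minEle a b); case: (leP a b); move=> ?
  end.
Definition clh (R : realType) (h y : R) := Num.min h (Num.max 0 y).

Definition tt (R : realType) (t0 h : R) (i : nat) := t0 + i%:R * h.
Definition gs (R : realType) (f : R -> R) (t0 h : R) (n : nat) (x : R) :=
  f t0 + \sum_(i < n) (f (tt t0 h i.+1) - f (tt t0 h i)) / h * clh h (x - tt t0 h i).

Lemma clsum (R : realType) (h z m : R) : 0 < h -> 0 <= m ->
  Num.min m (Num.max 0 z) + Num.min h (Num.max 0 (z - m)) = Num.min (m + h) (Num.max 0 z).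
Proof. move=> h0 m0; mmx; lra. Qed.

Lemma ttS (R : realType) (t0 h : R) i : tt t0 h i.+1 = tt t0 h i + h.
Proof. by rewrite /tt -natr1 mulrDl mul1r addrA. Qed.

Lemma tt_ge (R : realType) (t0 h : R) i : 0 <= h -> t0 <= tt t0 h i.
Proof. by move=> h0; rewrite /tt lerDl mulr_ge0. Qed.

Lemma Ssum (R : realType) (t0 h x : R) n : 0 < h ->
  \sum_(i < n) clh h (x - tt t0 h i) = Num.min (n%:R * h) (Num.max 0 (x - t0)).
Proof.
move=> h0; elim: n => [|n IH].
  by rewrite big_ord0 mul0r; mmx; lra.
rewrite big_ord_recr /= IH /clh /tt.
have -> : x - (t0 + n%:R * h) = (x - t0) - n%:R * h by ring.
rewrite clsum //; last by rewrite mulr_ge0 // ltW.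
by rewrite -natr1 mulrDl mul1r.
Qed.

Lemma clh_mono (R : realType) (h y z : R) : 0 < h -> y <= z -> clh h y <= clh h z.
Proof. rewrite /clh => h0 yz; mmx; lra. Qed.

Lemma Delta_le (R : realType) (f : R -> R) L t0 h i : 0 < h ->
  (forall x y : R, `|f x - f y| <= L * `|x - y|) ->
  `|f (tt t0 h i.+1) - f (tt t0 h i)| <= L * h.
Proof.
move=> h0 hf; apply: (le_trans (hf _ _)).
rewrite ttS addrAC subrr add0r ger0_norm //; exact: ltW.
Qed.

Lemma gs_lip_le (R : realType) (f : R -> R) L t0 h n x y : 0 < h -> 0 <= L ->
  (forall x y : R, `|f x - f y| <= L * `|x - y|) -> x <= y ->
  `|gs f t0 h n y - gs f t0 h n x| <= L * (y - x).
Proof.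
move=> h0 L0 hf xy; rewrite /gs [f t0 + _]addrC addrKA -sumrB.
apply: le_trans; first exact: ler_norm_sum.
apply: (@le_trans _ _ (\sum_(i < n) L * (clh h (y - tt t0 h i) - clh h (x - tt t0 h i)))).
  apply: ler_sum => i _.
  rewrite -mulrBr normrM [X in _ * X]ger0_norm; last first.
    by rewrite subr_ge0 clh_mono // lerB.
  apply: ler_wpM2r; first by rewrite subr_ge0 clh_mono // lerB.
  rewrite normrM normfV (gtr0_norm h0) ler_pdivrMr //.
  exact: Delta_le.
rewrite -mulr_sumr sumrB !Ssum //; apply: ler_wpM2l => //.
have nh : 0 <= n%:R * h by rewrite mulr_ge0 // ltW.
mmx; lra.
Qed.

Lemma gs_lip (R : realType) (f : R -> R) L t0 h n x y : 0 < h -> 0 <= L ->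
  (forall x y : R, `|f x - f y| <= L * `|x - y|) ->
  `|gs f t0 h n x - gs f t0 h n y| <= L * `|x - y|.
Proof.
move=> h0 L0 hf; case: (leP x y) => xy.
  rewrite distrC [`|x - y|]distrC [`|y - x|]ger0_norm ?subr_ge0 //; exact: gs_lip_le.
rewrite [`|x - y|]ger0_norm; last by rewrite subr_ge0 ltW.
apply: gs_lip_le => //; exact: ltW.
Qed.

Lemma gs_err (R : realType) (f : R -> R) L t0 h n : 0 < h -> 0 <= L ->
  (forall x y : R, `|f x - f y| <= L * `|x - y|) -> forall x,
  (x <= t0 -> gs f t0 h n x = f t0) /\ (tt t0 h n <= x -> gs f t0 h n x = f (tt t0 h n))
  /\ (t0 <= x <= tt t0 h n -> `|gs f t0 h n x - f x| <= L * h).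
Proof.
move=> h0 L0 hf; elim: n => [|n IH] x.
  have E : gs f t0 h 0 x = f t0 by rewrite /gs big_ord0 addr0.
  have E0 : tt t0 h 0 = t0 by rewrite /tt mul0r addr0.
  rewrite E E0; split => //; split => // /andP[a b].
  have -> : x = t0 by apply/eqP; rewrite eq_le a b.
  by rewrite subrr normr0 mulr_ge0 // ltW.
have gsS : gs f t0 h n.+1 x = gs f t0 h n x +
    (f (tt t0 h n.+1) - f (tt t0 h n)) / h * clh h (x - tt t0 h n).
  by rewrite /gs big_ord_recr /= addrA.
have tn : t0 <= tt t0 h n by apply: tt_ge; exact: ltW.
have tS : tt t0 h n.+1 = tt t0 h n + h by apply: ttS.
have [IH1 [IH2 IH3]] := IH x.
case: (leP x (tt t0 h n)) => xn.
  have cl0 : clh h (x - tt t0 h n) = 0 by rewrite /clh; mmx; lra.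
  rewrite gsS cl0 mulr0 addr0; split => //; split.
    move=> H; lra.
  by move=> /andP[a b]; apply: IH3; rewrite a xn.
rewrite gsS IH2; last exact: ltW.
split; first by move=> H; lra.
split.
  move=> H; have -> : clh h (x - tt t0 h n) = h by rewrite /clh; mmx; lra.
  rewrite divfK ?gt_eqF //; ring.
move=> /andP[a b].
have -> : clh h (x - tt t0 h n) = x - tt t0 h n by rewrite /clh; mmx; lra.
set s := x - tt t0 h n.
set lam := s / h.
have l0 : 0 <= lam by rewrite divr_ge0 /s; lra.
have l1 : lam <= 1 by rewrite ler_pdivrMr // mul1r /s; lra.
have hA := hf (tt t0 h n) x.
have hB := hf (tt t0 h n.+1) x.
rewrite [`|tt t0 h n - x|]distrC [`|x - tt t0 h n|]ger0_norm in hA; last by rewrite /s in l0 *; lra.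
rewrite [`|tt t0 h n.+1 - x|]ger0_norm in hB; last by lra.
move: hA hB; rewrite !ler_norml => /andP[A1 A2] /andP[B1 B2].
have -> : f (tt t0 h n) + (f (tt t0 h n.+1) - f (tt t0 h n)) / h * s - f x =
   (1 - lam) * (f (tt t0 h n) - f x) + lam * (f (tt t0 h n.+1) - f x).
  rewrite /lam; field; exact: lt0r_neq0.
have e1 : L * (x - tt t0 h n) <= L * h by apply: ler_wpM2l => //; lra.
have e2 : L * (tt t0 h n.+1 - x) <= L * h by apply: ler_wpM2l => //; lra.
apply/andP; split; nra.
Qed.
Lemma a_lin (R : realType) (alpha y : R) : 0 <= alpha -> alpha != 1 ->
  Num.max y (alpha * y) = Num.min 1 alpha * y + `|1 - alpha| * Num.max y 0.
Proof.
move=> a0 a1; case: (ltgtP alpha 1) a1 => // ha _.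
  rewrite (ger0_norm (x := 1 - alpha)); last by lra.
  mmx; nra.
rewrite (ltr0_norm (x := 1 - alpha)); last by lra.
mmx; nra.
Qed.

Lemma a_diff (R : realType) (a : R -> R) (alpha h y : R) : 0 <= alpha -> alpha != 1 -> 0 < h ->
  (forall x : R, a x = Num.max x (alpha * x)) ->
  a y - a (y - h) = Num.min 1 alpha * h + `|1 - alpha| * clh h y.
Proof.
move=> a0 a1 h0 ha; rewrite !ha !a_lin //.
have <- : Num.max y 0 - Num.max (y - h) 0 = clh h y by rewrite /clh; mmx; lra.
ring.
Qed.

Definition mknet (R : realType) (n : nat) (tl tr v : nat -> R) (b : R) : ann R 1 1 :=
  @ann_cons R 1 (n + n) 1 (const_mx 1) (col_mx (\col_(i < n) - tl i) (\col_(i < n) - tr i))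
     (@ann_last R (n + n) 1 (row_mx (\row_(i < n) v i) (\row_(i < n) - v i)) (const_mx b)).

Lemma mknet_val (R : realType) (a : R -> R) n tl tr v b x :
  realization1 a (@mknet R n tl tr v b) x =
  \sum_(i < n) (v i * a (x - tl i) - v i * a (x - tr i)) + b.
Proof.
rewrite /realization1 /= mxE [const_mx b _ _]mxE; congr (_ + _).
rewrite mxE big_split_ord /= -big_split /=; apply: eq_bigr => i _.
rewrite row_mxEl row_mxEr !mxE.
have -> : fintype.split (lshift n i) = inl i by exact: (unsplitK (inl _ i)).
have -> : fintype.split (rshift n i) = inr i by exact: (unsplitK (inr _ i)).
by rewrite !big_ord1 !mxE mul1r mulNr.
Qed.

Lemma lip_cont (R : realType) (g : R -> R) (L : R) : 0 <= L ->
  (forall x y, `|g x - g y| <= L * `|x - y|) -> continuous g.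
Proof.
move=> L0 H x; apply/cvgrPdist_lt => e e0.
have e1 : 0 < e / (L + 1) by rewrite divr_gt0 // ltr_wpDl.
apply/nbhs_ballP; exists (e / (L + 1)) => //= t; rewrite /ball /= => Ht.
apply: (le_lt_trans (H x t)).
move: Ht; rewrite ltr_pdivlMr ?ltr_wpDl // => Ht.
apply: le_lt_trans Ht; rewrite mulrDr mulr1 mulrC lerDl; done.
Qed.

Lemma fin_arith (R : realType) (nn ru W : R) : nn <= 2 * ru + 1 -> ru <= W -> 1 <= W ->
  (nn + nn <= 4 * W + 2) /\ (3 * (nn + nn) + 1 <= 24 * W).
Proof. move=> *; split; lra. Qed.

Lemma nat_arith (m : nat) : ((m + m) * (1 + 1) + 1 * (m + m + 1) = 3 * (m + m) + 1)%N.
Proof. lia. Qed.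

Theorem mainTheorem17 (R : realType) (eps L q alpha : R) (f a : R -> R)
  (heps : 0 < eps) (heps1 : eps <= 1) (hL : 0 <= L) (hq : 1 < q)
  (halpha : 0 <= alpha) (halpha1 : alpha != 1)
  (hf : forall x y : R, `|f x - f y| <= L * `|x - y|)
  (ha_cont : continuous a)
  (ha : forall x : R, a x = Num.max x (alpha * x)) :
  exists G : ann R 1 1,
    ann_wf G /\ 
        continuous (realization1 a G) /\
        ann_hidden G = 1%N /\
        (forall x y : R,
           `|realization1 a G x - realization1 a G y| <= L * `|x - y|) /\
        (forall x : R,
           `|realization1 a G x - f x| <= eps * Num.max 1 (`|x| `^ q)) /\
        (ann_D1 G)%:R <= 4 * (Num.max 1 (2 * L)) `^ (q / (q - 1))
                           * eps `^ (- (q / (q - 1))) + 2 /\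
        ann_params G = (3 * ann_D1 G + 1)%N /\
        (3 * ann_D1 G + 1)%:R <= 24 * (Num.max 1 (2 * L)) `^ (q / (q - 1))
                                 * eps `^ (- (q / (q - 1))).
Proof.
set K := Num.max 1 (2 * L).
have K1 : 1 <= K by rewrite /K le_max lexx.
have K2 : 2 * L <= K by rewrite /K le_max lexx orbT.
have K0 : 0 < K by lra.
set p := q / (q - 1).
have q1 : 0 < q - 1 by lra.
have p0 : 0 < p by rewrite /p divr_gt0 //; lra.
set u := K / (2 * eps).
have u0 : 0 < u by rewrite /u divr_gt0 //; lra.
set r := u `^ (1 / (q - 1)).
have r0 : 0 < r by rewrite /r powR_gt0.
set h := u^-1.
have h0 : 0 < h by rewrite /h invr_gt0.
set t0 := - r.
have tru : 0 <= 2 * r * u by apply: mulr_ge0; [apply: mulr_ge0 => //; exact: ltW | exact: ltW].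
have /andP[tr1 tr2] := truncn_itv tru.
set n := (Num.truncn (2 * r * u)).+1.
set c := Num.min 1 alpha.
set d := `|1 - alpha|.
have d0 : 0 < d by rewrite /d normr_gt0 subr_eq0 eq_sym.
pose Dl i := f (tt t0 h i.+1) - f (tt t0 h i).
pose v i := Dl i / (h * d).
pose b := f t0 - \sum_(i < n) Dl i * c / d.
pose G := mknet n (tt t0 h) (fun i => tt t0 h i.+1) v b.
have gE : realization1 a G = gs f t0 h n.
  apply: funext => x; rewrite mknet_val /gs.
  have E : forall i, v i * a (x - tt t0 h i) - v i * a (x - tt t0 h i.+1) =
      Dl i * c / d + Dl i / h * clh h (x - tt t0 h i).
    move=> i; rewrite -mulrBr ttS.
    have -> : x - (tt t0 h i + h) = (x - tt t0 h i) - h by ring.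
    rewrite (a_diff (alpha := alpha)) // /v /c /d.
    field; apply/andP; split; exact: lt0r_neq0.
  rewrite (eq_bigr (fun i : 'I_n => Dl i * c / d + Dl i / h * clh h (x - tt t0 h i))); last first.
    by move=> i _; exact: E.
  rewrite big_split /= /b; ring.
have Lh : L * h <= eps.
  have -> : L * h = (2 * L) * eps / K by rewrite /h /u invf_div; field; exact: lt0r_neq0.
  rewrite ler_pdivrMr //; nra.
have big : forall z, r <= z -> L * z <= eps * z `^ q.
  move=> z rz; have z0 : 0 < z by lra.
  rewrite -(mulr_powRB1 (ltW z0) (lt_trans ltr01 hq)).
  have H1 : u <= z `^ (q - 1).
    have -> : u = r `^ (q - 1).
      rewrite /r -powRrM mul1r mulVf ?powRr1 //; [exact: ltW | exact: lt0r_neq0].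
    apply: ge0_ler_powR => //; [exact: ltW | rewrite nnegrE; exact: ltW | rewrite nnegrE; exact: ltW].
  have H2 : L <= eps * u.
    have -> : eps * u = K / 2 by rewrite /u; field; exact: lt0r_neq0.
    lra.
  have ez : 0 <= eps * z by rewrite mulr_ge0 // ltW.
  have H3 : eps * z * u <= eps * z * z `^ (q - 1) by rewrite ler_wpM2l.
  nra.
have tnr : r <= tt t0 h n.
  have : 2 * r <= n%:R * h.
    rewrite -(ler_pM2r u0) /h divfK ?gt_eqF //; exact: ltW.
  rewrite /tt /t0; lra.
have gerr := @gs_err R f L t0 h n h0 hL hf.
exists G; split; first by [].
split; first by rewrite gE; apply: (lip_cont hL) => x y; exact: gs_lip.
split; first by [].
split; first by rewrite gE => x y; exact: gs_lip.
have D1 : ann_D1 G = (n + n)%N by [].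
split.
  move=> x; rewrite gE.
  have [gerr1 [gerr2 gerr3]] := gerr x.
  have M1 : eps <= eps * Num.max 1 (`|x| `^ q).
    rewrite -{1}(mulr1 eps) ler_wpM2l ?le_max ?lexx //; exact: ltW.
  have M2 : eps * `|x| `^ q <= eps * Num.max 1 (`|x| `^ q).
    rewrite ler_wpM2l ?le_max ?lexx ?orbT //; exact: ltW.
  case: (leP x t0) => xt0.
    rewrite (gerr1 xt0) distrC.
    apply: le_trans (hf _ _) _.
    apply: le_trans M2.
    rewrite /t0 in xt0 *.
    have xn : x <= 0 by lra.
    have xr : r <= `|x| by rewrite ler0_norm //; lra.
    apply: le_trans (big _ xr).
    rewrite ler_wpM2l // (ler0_norm xn) ler0_norm; lra.
  case: (leP (tt t0 h n) x) => xtn.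
    rewrite (gerr2 xtn) distrC.
    apply: le_trans (hf _ _) _.
    apply: le_trans M2.
    have xp : 0 <= x by lra.
    have xr : r <= `|x| by rewrite ger0_norm //; lra.
    apply: le_trans (big _ xr).
    rewrite ler_wpM2l // (ger0_norm xp) ger0_norm; lra.
  apply: le_trans M1; apply: le_trans Lh; apply: gerr3.
  apply/andP; split; exact: ltW.
have ru : r * u = u `^ p.
  have -> : p = 1 / (q - 1) + 1 by rewrite /p; field; exact: lt0r_neq0.
  rewrite powRD ?powRr1 //; [exact: ltW | by rewrite (gt_eqF u0) /= implybT].
have uW : u `^ p <= K `^ p * eps `^ (- p).
  have -> : eps `^ (- p) = (eps ^-1) `^ p.
    by rewrite -powR_inv1 ?(ltW heps) // -powRrM mulN1r.
  rewrite -powRM; [|exact: ltW | by rewrite invr_ge0 ltW].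
  apply: ge0_ler_powR; [exact: ltW | rewrite nnegrE; exact: ltW | rewrite nnegrE; apply: mulr_ge0; [exact: ltW | by rewrite invr_ge0 ltW] |].
  rewrite /u ler_pM2l // lef_pV2 ?posrE //; lra.
have W1 : 1 <= K `^ p * eps `^ (- p).
  have A : 1 <= K `^ p by have := ler_powR K1 (ltW p0); rewrite powRr0.
  have B : 1 <= eps `^ (- p).
    rewrite powRN invf_ge1 ?powR_gt0 //.
    have -> : 1 = 1 `^ p by rewrite powR1.
    apply: ge0_ler_powR; [exact: ltW | rewrite nnegrE; exact: ltW | by rewrite nnegrE | done].
  nra.
have nN : n%:R <= 2 * r * u + 1 by rewrite /n -natr1 lerD2r.
rewrite -mulrA ru in nN.
have [F1 F2] := fin_arith nN uW W1.
rewrite D1; split.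
  by rewrite natrD -!mulrA.
split; first by rewrite /=; apply: nat_arith.
by rewrite natrD natrM natrD -!mulrA.
Qed.
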